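(* Let $n\ge 1$, $N=\{1,\dots,n\}$, $A=(a_{ij})\in[0,1]^{n\times n}$ and $\lambda\in[0,+\infty)$. If for every $k=(k_1,\dots,k_n)\in K$ the system $$q_{(k_j-1)j}\le x_j\le q_{k_jj}\ \text{ for all } j\in N,\qquad \sum_{j\in N}\big[\delta_{ij}\, x_j+(1-\delta_{ij})\, a_{ij}\big]=\lambda x_i\ \text{ for all } i\in N$$ has no solution $x\in[0,1]^n$ with $x\neq\theta$, then $V(A,\lambda)=\emptyset$.
   Context: $\theta=(0,\dots,0)\in[0,1]^n$. For $x\in[0,1]^n$ and $\lambda\in[0,+\infty)$, the equation $A\odot x^T=\lambda x^T$ means $\sum_{j\in N}\min\{a_{ij},x_j\}=\lambda x_i$ for every $i\in N$. $V(A,\lambda)=\{x\in[0,1]^n : A\odot x^T=\lambda x^T,\ x\neq\theta\}$. For each $j\in N$, let $t_j$ be the number of distinct values in $\{a_{ij}: i\in N\}\cap(0,1)$, list these values as $q_{1j}<\dots<q_{t_jj}$, and put $q_{0j}=0$, $q_{(t_j+1)j}=1$. Let $K_j=\{1,\dots,t_j+1\}$ (the indices $k$ with $q_{kj}>0$) and $K=K_1\times\dots\times K_n$. For $k\in K$ and $i,j\in N$, $\delta_{ij}=1$ if $q_{k_jj}\le a_{ij}$ and $\delta_{ij}=0$ if $a_{ij}\le q_{(k_j-1)j}$. *)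

(* Defs.v *)
From mathcomp Require Import all_boot all_order all_algebra.
Set Implicit Arguments. Unset Strict Implicit. Unset Printing Implicit Defensive.
Import Order.TTheory GRing.Theory Num.Theory.
Local Open Scope ring_scope.

Section Defs.
Variables (R : realFieldType) (n : nat).

Definition in_unit_cube (x : 'rV[R]_n) : Prop := forall j, 0 <= x ord0 j <= 1.

(* A (.) x^T = lambda x^T  in max-min (Lukasiewicz-type) sense used by the paper:
   sum_j min(a_ij, x_j) = lambda x_i for all i *)
Definition eigen_eq (A : 'M[R]_n) (lam : R) (x : 'rV[R]_n) : Prop :=
  forall i, \sum_j Num.min (A i j) (x ord0 j) = lam * x ord0 i.

Definition V (A : 'M[R]_n) (lam : R) (x : 'rV[R]_n) : Prop :=
  in_unit_cube x /\ eigen_eq A lam x /\ x != 0.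

Definition qs (A : 'M[R]_n) (j : 'I_n) : seq R :=
  sort <=%R (undup [seq A i j | i <- enum 'I_n & (0 < A i j < 1)]).

Definition t (A : 'M[R]_n) (j : 'I_n) : nat := size (qs A j).

(* q_{kj} for 0 <= k <= t_j + 1, with q_{0j} = 0, q_{(t_j+1)j} = 1 *)
Definition q (A : 'M[R]_n) (k : nat) (j : 'I_n) : R :=
  nth 0 (0 :: rcons (qs A j) 1) k.

Definition in_K (A : 'M[R]_n) (k : 'I_n -> nat) : Prop :=
  forall j, (1 <= k j <= (t A j).+1)%N.

(* delta_ij (depending on k): 1 if q_{k_j j} <= a_ij, 0 otherwise (then a_ij <= q_{(k_j-1) j}) *)
Definition delta (A : 'M[R]_n) (k : 'I_n -> nat) (i j : 'I_n) : R :=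
  if q A (k j) j <= A i j then 1 else 0.

Definition system_k (A : 'M[R]_n) (lam : R) (k : 'I_n -> nat) (x : 'rV[R]_n) : Prop :=
  (forall j, q A (k j).-1 j <= x ord0 j <= q A (k j) j) /\
  (forall i, \sum_j (delta A k i j * x ord0 j + (1 - delta A k i j) * A i j)
             = lam * x ord0 i).

End Defs.

(* Main.v *)
Require Import Defs.
From mathcomp Require Import all_boot all_order all_algebra.
Import Order.TTheory GRing.Theory Num.Theory.
Local Open Scope ring_scope.

Lemma qs_mem (R : realFieldType) (n : nat) (A : 'M[R]_n) j a :
  a \in qs A j -> 0 < a < 1.
Proof.
rewrite /qs mem_sort mem_undup => /mapP [i]; rewrite mem_filter => /andP [h _] ->.
exact: h.
Qed.

Lemma qs_in (R : realFieldType) (n : nat) (A : 'M[R]_n) i j :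
  0 < A i j < 1 -> A i j \in qs A j.
Proof.
move=> h; rewrite /qs mem_sort mem_undup; apply: map_f.
by rewrite mem_filter h mem_enum.
Qed.

Lemma u_sorted (R : realFieldType) (n : nat) (A : 'M[R]_n) j :
  sorted <=%R (rcons (qs A j) 1).
Proof.
have hs : sorted <=%R (qs A j) by apply: sort_sorted => a b; exact: le_total.
have hl : forall y, y \in qs A j -> y <= 1.
  by move=> y /qs_mem /andP [_ /ltW].
move: hs hl; case: (qs A j) => [//|a s] /= hs hl.
rewrite rcons_path hs /=; apply: hl.
by rewrite mem_last.
Qed.

Theorem theorem3p2 (R : realFieldType) (n : nat) (A : 'M[R]_n) (lam : R) :
  (1 <= n)%N ->
  (forall i j, 0 <= A i j <= 1) ->
  0 <= lam ->
  (forall k : 'I_n -> nat, in_K A k ->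
     ~ (exists x : 'rV[R]_n, in_unit_cube x /\ x != 0 /\ system_k A lam k x)) ->
  forall x : 'rV[R]_n, ~ V A lam x.
Proof.
move=> _ hA hlam hK x [hx [heq hx0]].
pose u := fun j => rcons (qs A j) 1.
pose p := fun j => (fun y => x ord0 j <= y).
pose m := fun j => find (p j) (u j).
pose k := fun j => (m j).+1.
have hhas : forall j, has (p j) (u j).
  move=> j; apply/hasP; exists 1; first by rewrite mem_rcons mem_head.
  by rewrite /p; case/andP: (hx j).
have hm : forall j, (m j < size (u j))%N by move=> j; rewrite -has_find.
have hq : forall j, q A (k j) j = nth 0 (u j) (m j) by [].
have hup : forall j, x ord0 j <= q A (k j) j.
  by move=> j; rewrite hq; exact: (nth_find 0 (hhas j)).
have hlo : forall j, q A (k j).-1 j <= x ord0 j.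
  move=> j; rewrite /k /=; case E: (m j) => [|m'].
    by rewrite /q /=; case/andP: (hx j).
  rewrite /q /=.
  have : (m' < m j)%N by rewrite E.
  move/(before_find 0); rewrite /p => /negbT; rewrite -ltNge => /ltW.
  done.
have hkey : forall i j, ~~ (q A (k j) j <= A i j) -> A i j <= x ord0 j.
  move=> i j; rewrite -ltNge => hlt.
  case/andP: (hA i j) => h0 h1.
  have [a0|a0] := eqVneq (A i j) 0; first by rewrite a0; case/andP: (hx j).
  have [a1|a1] := eqVneq (A i j) 1.
    exfalso; move: hlt; rewrite a1 hq.
    have : nth 0 (u j) (m j) \in u j by rewrite mem_nth.
    rewrite mem_rcons inE => /orP [/eqP ->|/qs_mem /andP [_ hh]].
      by rewrite ltxx.
    by rewrite ltNge (ltW hh).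
  have hin : A i j \in u j.
    by rewrite mem_rcons inE qs_in ?orbT // lt0r a0 h0 /= lt_neqAle a1 h1.
  set pi := index (A i j) (u j).
  have hpi : (pi < size (u j))%N by rewrite index_mem.
  have hnth : nth 0 (u j) pi = A i j by rewrite nth_index.
  have [hle|hlt2] := leqP (m j) pi.
    exfalso; move: hlt; rewrite hq -hnth.
    have := sorted_leq_nth (@le_trans _ R) (@lexx _ R) 0 (@u_sorted _ _ A j)
      (m j) pi (hm j) hpi hle.
    by move=> H; rewrite ltNge H.
  move: (before_find 0 hlt2); rewrite hnth /p => /negbT; rewrite -ltNge.
  exact: ltW.
apply: (hK k).
  move=> j; rewrite /k /= ltnS.
  by have := hm j; rewrite /u size_rcons ltnS.
exists x; split; first exact: hx.
split; first exact: hx0.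
split; first by move=> j; rewrite hlo hup.
move=> i; rewrite -heq; apply: eq_bigr => j _.
rewrite /delta; case: ifP => h.
  by rewrite mul1r subrr mul0r addr0 min_r // (le_trans (hup j) h).
by rewrite mul0r add0r subr0 mul1r min_l // hkey // h.
Qed.
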